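(* Let $f : \mathbb{R}^{n_1} \times \mathbb{R}^{n_2} \to \mathbb{R}^{n_3}$, $(u,v) \mapsto u*v$, be a bilinear map and let $q \in \mathbb{Z}_{\geq 0}$. The following are equivalent: (1) $Q(f) \leq q$; (2) for every integer $r \geq q$ and all $u_1,\ldots,u_r \in \mathbb{R}^{n_1}$, $v_1,\ldots,v_r \in \mathbb{R}^{n_2}$, setting \[ R := \{ \alpha \in \mathbb{R}^{[r]\times[r]} \mid \textstyle\sum_{i,j} \alpha_{ij}\, u_i * v_j = 0 \} \] and $\pi : \mathbb{R}^{[r]\times[r]} \to \mathbb{R}^r$, $\alpha \mapsto (\alpha_{11},\ldots,\alpha_{rr})$, we have $\dim \pi(R) \geq r - q$.
   Context: $[r] = \{1,\ldots,r\}$. For a bilinear map $f : \mathbb{R}^{n_1} \times \mathbb{R}^{n_2} \to \mathbb{R}^{n_3}$, its subrank $Q(f)$ is the largest $r$ such that there exist linear maps $\varphi_1 : \mathbb{R}^r \to \mathbb{R}^{n_1}$, $\varphi_2 : \mathbb{R}^r \to \mathbb{R}^{n_2}$, $\varphi_3 : \mathbb{R}^{n_3} \to \mathbb{R}^r$ with $\varphi_3(f(\varphi_1(a), \varphi_2(b))) = (a_1b_1,\ldots,a_rb_r)$ for all $a,b \in \mathbb{R}^r$. *)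

(* Defs.v *)
From HB Require Import structures.
From mathcomp Require Import all_boot all_order all_algebra.
From mathcomp Require Import reals.
Set Implicit Arguments. Unset Strict Implicit. Unset Printing Implicit Defensive.
Import Order.TTheory GRing.Theory Num.Theory.
Local Open Scope ring_scope.

Definition bilinear_map (R : realType) (n1 n2 n3 : nat)
  (f : 'rV[R]_n1 -> 'rV[R]_n2 -> 'rV[R]_n3) : Prop :=
  (forall (a : R) (u u' : 'rV[R]_n1) (v : 'rV[R]_n2),
      f (a *: u + u') v = a *: f u v + f u' v) /\
  (forall (a : R) (u : 'rV[R]_n1) (v v' : 'rV[R]_n2),
      f u (a *: v + v') = a *: f u v + f u v').

(* There exist linear maps phi1 : R^r -> R^n1, phi2 : R^r -> R^n2,
   phi3 : R^n3 -> R^r (represented by matrices acting on row vectors) with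
   phi3 (f (phi1 a) (phi2 b)) = (a_1 b_1, ..., a_r b_r) for all a, b. *)
Definition subrank_witness (R : realType) (n1 n2 n3 : nat)
  (f : 'rV[R]_n1 -> 'rV[R]_n2 -> 'rV[R]_n3) (r : nat) : Prop :=
  exists (P1 : 'M[R]_(r, n1)) (P2 : 'M[R]_(r, n2)) (P3 : 'M[R]_(n3, r)),
    forall a b : 'rV[R]_r,
      f (a *m P1) (b *m P2) *m P3 = \row_(i < r) (a 0 i * b 0 i).

(* Q(f) <= q, where Q(f) is the largest r admitting a witness:
   every r admitting a witness satisfies r <= q. *)
Definition subrank_le (R : realType) (n1 n2 n3 : nat)
  (f : 'rV[R]_n1 -> 'rV[R]_n2 -> 'rV[R]_n3) (q : nat) : Prop :=
  forall r : nat, subrank_witness f r -> (r <= q)%N.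

Definition contract_map (R : realType) (n1 n2 n3 r : nat)
  (f : 'rV[R]_n1 -> 'rV[R]_n2 -> 'rV[R]_n3)
  (u : 'I_r -> 'rV[R]_n1) (v : 'I_r -> 'rV[R]_n2) (alpha : 'M[R]_r) : 'rV[R]_n3 :=
  \sum_(i < r) \sum_(j < r) alpha i j *: f (u i) (v j).

Definition diag_proj (R : realType) (r : nat) (alpha : 'M[R]_r) : 'rV[R]_r :=
  \row_(i < r) alpha i i.

Definition rel_space (R : realType) (n1 n2 n3 r : nat)
  (f : 'rV[R]_n1 -> 'rV[R]_n2 -> 'rV[R]_n3)
  (u : 'I_r -> 'rV[R]_n1) (v : 'I_r -> 'rV[R]_n2) : {vspace 'M[R]_r} :=
  lker (linfun (contract_map f u v)).

Definition proj_rel_space (R : realType) (n1 n2 n3 r : nat)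
  (f : 'rV[R]_n1 -> 'rV[R]_n2 -> 'rV[R]_n3)
  (u : 'I_r -> 'rV[R]_n1) (v : 'I_r -> 'rV[R]_n2) : {vspace 'rV[R]_r} :=
  (linfun (@diag_proj R r) @: rel_space f u v)%VS.

(* Main.v *)
Require Import Defs.
From HB Require Import structures.
From mathcomp Require Import all_boot all_order all_algebra.
From mathcomp Require Import reals.
From mathcomp Require Import zify.
Import Order.TTheory GRing.Theory Num.Theory.
Local Open Scope ring_scope.

Lemma coreB (R : realType) (r : nat) (W : {vspace 'rV[R]_r}) :
  exists s (sg : 'I_s -> 'I_r) (H : 'M[R]_(r, s)),
    [/\ (r - \dim W <= s)%N, injective sg,
        (forall w, w \in W -> w *m H = 0) &
        rowsub sg 1%:M *m H = 1%:M].
Proof.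
pose Wm := \matrix_(i < \dim W) (vbasis W)`_i.
pose M := cokermx Wm.
have /row_freeP [B HB] := maxrowsub_free M.
exists (\rank M), (maxrankfun M), (M *m B); split.
- rewrite mxrank_coker; apply: leq_sub2l; exact: rank_leq_row.
- exact: maxrankfun_inj.
- move=> w /coord_vbasis ->.
  have -> : \sum_(i < \dim W) coord (vbasis W) i w *: (vbasis W)`_i
     = (\row_i coord (vbasis W) i w) *m Wm.
    rewrite mulmx_sum_row; apply: eq_bigr => i _; by rewrite rowK mxE.
  by rewrite -mulmxA (mulmxA Wm) mulmx_coker mul0mx mulmx0.
- by rewrite mulmxA -rowsubE.
Qed.
Lemma extC (R : realType) (r n s : nat) (C : 'Hom('M[R]_r, 'rV[R]_n))
  (L : 'Hom('M[R]_r, 'rV[R]_s)) :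
  (forall a, C a = 0 -> L a = 0) ->
  exists P : 'M[R]_(n, s), forall a, C a *m P = L a.
Proof.
move=> HCL.
exists (lin1_mx (L \o C^-1)%VF) => a.
rewrite mul_rV_lin1 /= lfunE /=.
have: C ((C^-1)%VF (C a)) = C a by rewrite limg_lfunVK // memv_img ?memvf.
move=> e; apply/eqP; rewrite -subr_eq0 -linearB /=; apply/eqP/HCL.
by rewrite linearB /= e subrr.
Qed.

Section Lin.
Variables (R : realType) (n1 n2 n3 r : nat)
  (f : 'rV[R]_n1 -> 'rV[R]_n2 -> 'rV[R]_n3)
  (u : 'I_r -> 'rV[R]_n1) (v : 'I_r -> 'rV[R]_n2).

Lemma contract_lin : linear (contract_map f u v).
Proof.
move=> a x y; rewrite /contract_map scaler_sumr -big_split; apply: eq_bigr => i _.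
rewrite scaler_sumr -big_split; apply: eq_bigr => j _.
by rewrite !mxE scalerA scalerDl.
Qed.
HB.instance Definition _ := GRing.isLinear.Build R 'M[R]_r 'rV[R]_n3 _ (contract_map f u v) contract_lin.

Lemma diag_lin : linear (@diag_proj R r).
Proof. by move=> a x y; apply/rowP => i; rewrite !mxE. Qed.
HB.instance Definition _ := GRing.isLinear.Build R 'M[R]_r 'rV[R]_r _ (@diag_proj R r) diag_lin.
End Lin.

Section Bil.
Variables (R : realType) (n1 n2 n3 r : nat)
  (f : 'rV[R]_n1 -> 'rV[R]_n2 -> 'rV[R]_n3)
  (u : 'I_r -> 'rV[R]_n1) (v : 'I_r -> 'rV[R]_n2).
Hypothesis Hf : bilinear_map f.

Lemma bil_expand (x y : 'rV[R]_r) :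
  f (x *m \matrix_i u i) (y *m \matrix_j v j) = contract_map f u v (x^T *m y).
Proof.
case: Hf => H1 H2.
have f0l w : f 0 w = 0.
  by have := H1 (-1) 0 0 w; rewrite scaler0 addr0 scaleN1r addNr.
have f0r z : f z 0 = 0.
  by have := H2 (-1) z 0 0; rewrite scaler0 addr0 scaleN1r addNr.
have fDl w : {morph (fun z => f z w) : a b / a + b >-> a + b}.
  by move=> a b /=; have := H1 1 a b w; rewrite !scale1r.
have fDr z : {morph (fun w => f z w) : a b / a + b >-> a + b}.
  by move=> a b /=; have := H2 1 z a b; rewrite !scale1r.
have fZl a z w : f (a *: z) w = a *: f z w.
  by have := H1 a z 0 w; rewrite !addr0 f0l addr0.
have fZr a z w : f z (a *: w) = a *: f z w.
  by have := H2 a z w 0; rewrite !addr0 f0r addr0.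
rewrite !mulmx_sum_row (big_morph _ (fDl _) (f0l _)) /contract_map.
apply: eq_bigr => i _; rewrite fZl (big_morph _ (fDr _) (f0r _)) scaler_sumr.
apply: eq_bigr => j _; rewrite fZr !rowK scalerA.
by rewrite !mxE big_ord1 !mxE.
Qed.
End Bil.

Lemma sum_delta (R : realType) (r : nat) (g : 'I_r -> R) (k : 'I_r) :
  \sum_j g j * (k == j)%:R = g k.
Proof.
rewrite (bigD1 k) //= eqxx mulr1 big1 ?addr0 // => j /negbTE.
by rewrite eq_sym => ->; rewrite mulr0.
Qed.

Theorem lemma5p2 (R : realType) (n1 n2 n3 : nat)
  (f : 'rV[R]_n1 -> 'rV[R]_n2 -> 'rV[R]_n3) (q : nat) :
  bilinear_map f ->
  (subrank_le f q <->
   (forall (r : nat), (q <= r)%N ->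
    forall (u : 'I_r -> 'rV[R]_n1) (v : 'I_r -> 'rV[R]_n2),
      (r - q <= \dim (proj_rel_space f u v))%N)).
Proof.
move=> Hf; split.
- move=> Hsub r qr u v; rewrite leqNgt; apply/negP => Hlt.
  have [s [sg [H [Hs Hinj HW HSel]]]] := @coreB R r (proj_rel_space f u v).
  pose Sel : 'M[R]_(s, r) := rowsub sg 1%:M.
  have [|P3 HP3] := @extC R r n3 s (linfun (contract_map f u v))
     (linfun (mulmxr H) \o linfun (@diag_proj R r))%VF.
    move=> a Ca; rewrite comp_lfunE !lfunE /=; apply: HW.
    have Ha : a \in rel_space f u v by rewrite memv_ker Ca.
    have -> : diag_proj a = linfun (@diag_proj R r) a by rewrite lfunE.
    by rewrite memv_img.
  have xE (c : 'rV[R]_s) (i : 'I_r) : (c *m Sel) 0 i =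
      if [pick k | sg k == i] is Some k then c 0 k else 0.
    rewrite mxE; case: pickP => [k /eqP <- | none].
      rewrite (bigD1 k) //= !mxE eqxx mulr1 big1 ?addr0 // => j jk.
      by rewrite !mxE (inj_eq Hinj) (negbTE jk) mulr0.
    by rewrite big1 // => j _; rewrite !mxE none mulr0.
  have Hw : subrank_witness f s.
    exists (Sel *m \matrix_i u i), (Sel *m \matrix_j v j), P3 => a b.
    rewrite !mulmxA bil_expand //.
    have := HP3 ((a *m Sel)^T *m (b *m Sel)); rewrite comp_lfunE !lfunE /= => ->.
    have -> : diag_proj ((a *m Sel)^T *m (b *m Sel))
        = (\row_i (a 0 i * b 0 i)) *m Sel.
      apply/rowP => i; rewrite [LHS]mxE mxE big_ord1 mxE !xE.
      by case: pickP => [k _ | _]; rewrite ?mxE ?mulr0.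
    by rewrite -mulmxA HSel mulmx1.
  have := Hsub s Hw; lia.
- move=> H2 r [P1 [P2 [P3 HP]]]; rewrite leqNgt; apply/negP => qr.
  have := H2 r (ltnW qr) (fun i => row i P1) (fun j => row j P2).
  have -> : \dim (proj_rel_space f (fun i => row i P1) (fun j => row j P2)) = 0%N.
    apply/eqP; rewrite -leqn0.
    set W := proj_rel_space _ _ _.
    suff: (W <= 0)%VS by move/dimvS; rewrite dimv0.
    apply/subvP => x /memv_imgP [a Ha ->]; rewrite memv0 lfunE /=; apply/eqP.
    move: Ha; rewrite memv_ker lfunE /= => /eqP Ca.
    have : contract_map f (fun i => row i P1) (fun j => row j P2) a *m P3 = 0.
      by rewrite Ca mul0mx.
    rewrite /contract_map mulmx_suml => <-.
    apply/rowP => k; rewrite mxE summxE.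
    under eq_bigr => i _ do rewrite mulmx_suml summxE.
    under eq_bigr => i _ do under eq_bigr => j _ do
      rewrite -scalemxAl !rowE HP !mxE.
    rewrite -(@sum_delta _ _ (fun i => a i k) k).
    apply: eq_bigr => i _.
    rewrite -(@sum_delta _ _ (fun j => a i j * (k == i)%:R) k).
    apply: eq_bigr => j _.
    by rewrite !eqxx /= mulrA.
  lia.
Qed.
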